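(* Let $C_1,\dots,C_K$ be $K\ge 2$ initial clusters (disjoint groups of users) and let $\alpha\in(0,1)$. Suppose a notion of ''similarity'' between clusters (including clusters formed as unions of the $C_i$) is given which is merge-invariant: whenever $A$, $B$, $D$ are clusters that are pairwise similar, $A$ is similar to the merged cluster $B\cup D$. Consider the following procedure. Set $C^{(0)}_i=C_i$ for $1\le i\le K$ and $b=0$. At iteration $b$ (with current clusters $C^{(b)}_1,\dots,C^{(b)}_{K-b}$), for every pair $i\neq j$ compute a p-value $\hat p^{(b)}_{i,j}$ for the hypothesis $H^{(b)}_{i,j}$: ''$C^{(b)}_i$ is similar to $C^{(b)}_j$''. If $\hat p^{(b)}_{i,j}<\alpha/K$ for all pairs $i\neq j$, stop, reject the null hypothesis, and report $C^{(b)}_1,\dots,C^{(b)}_{K-b}$ as disparate clusters. Otherwise merge the two clusters with the largest p-value $\hat p^{(b)}_{i,j}$ into one cluster, yielding clusters $C^{(b+1)}_1,\dots,C^{(b+1)}_{K-b-1}$, set $b\leftarrow b+1$ and repeat (if only one cluster remains, stop without rejecting). Assume the p-values are valid (i.e. whenever $H^{(b)}_{i,j}$ is true, $P(\hat p^{(b)}_{i,j}\le t)\le t$ for all $t\in[0,1]$) and are independent of the previous decisions to merge clusters (so this validity holds conditionally on the merge history). Then: (1) if the null hypothesis $H_0$: ''$C_i$ is similar to $C_j$ for all $i\neq j$, $1\le i,j\le K$'' is true, the probability that the procedure rejects $H_0$ is at most $\alpha$; and (2) the probability that the procedure rejects and reports clusters $C^{(b)}_1,\dots,C^{(b)}_{K-b}$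 as disparate when in fact at least one pair of these reported clusters is similar is at most $\alpha$.
   Context: A ''cluster'' is a set of users formed as a union of some of the initial groups $C_1,\dots,C_K$. ''Similarity'' is an arbitrary pre-specified binary relation between clusters (e.g. equal treatment effect, equal lift, or equality of a fairness metric), assumed to satisfy the merge-invariance property stated in the claim. A p-value for a hypothesis is a statistic taking values in $[0,1]$. *)

(* Defs.v *)
From HB Require Import structures.
From mathcomp Require Import all_boot all_order all_algebra.
From mathcomp Require Import all_classical all_reals all_analysis.
Set Implicit Arguments. Unset Strict Implicit. Unset Printing Implicit Defensive.
Import Order.TTheory GRing.Theory Num.Theory.
Local Open Scope ring_scope.

(* Clusters are identified with the set of indices i of the initial groups
   C_i whose union they are: a cluster is an element of {set 'I_K}. *)

Inductive status := Running | Rejected | Accepted.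

Section Procedure.
Variables (K : nat) (R : realType) (alpha : R) (T : Type).
(* p b A B w : the p-value \hat p^{(b)} at iteration b for the hypothesis
   "cluster A is similar to cluster B", at the outcome w *)
Variable p : nat -> {set 'I_K} -> {set 'I_K} -> T -> R.

Definition initial_clusters : {set {set 'I_K}} := [set [set i] | i : 'I_K].

Definition all_below (b : nat) (S : {set {set 'I_K}}) (w : T) : bool :=
  [forall A in S, forall B in S, (A != B) ==> (p b A B w < alpha / K%:R)].

Definition merge_pair (b : nat) (S : {set {set 'I_K}}) (w : T)
  : {set 'I_K} * {set 'I_K} :=
  Order.arg_max (finset.set0, finset.set0)
    (fun AB => (AB.1 \in S) && (AB.2 \in S) && (AB.1 != AB.2))
    (fun AB => p b AB.1 AB.2 w).

Definition merge (S : {set {set 'I_K}}) (AB : {set 'I_K} * {set 'I_K})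
  : {set {set 'I_K}} :=
  ((S :\ AB.1) :\ AB.2) :|: [set AB.1 :|: AB.2].

Fixpoint config (b : nat) (w : T) : {set {set 'I_K}} * status :=
  match b with
  | 0 => (initial_clusters, Running)
  | b'.+1 =>
      let c := config b' w in
      match c.2 with
      | Running =>
          let S := c.1 in
          if (#|S| <= 1)%N then (S, Accepted)
          else if all_below b' S w then (S, Rejected)
          else (merge S (merge_pair b' S w), Running)
      | _ => c
      end
  end.

Definition history (b : nat) (w : T) : seq ({set {set 'I_K}} * status) :=
  mkseq (fun k => config k w) b.+1.

(* the procedure runs at most K iterations (at most K-1 merges), so this is
   its terminal configuration *)
Definition final (w : T) : {set {set 'I_K}} * status := config K w.

End Procedure.

(* Main.v *)
Require Import Defs.
From HB Require Import structures.
From mathcomp Require Import all_boot all_order all_algebra.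
From mathcomp Require Import all_classical all_reals all_analysis.
Import Order.TTheory GRing.Theory Num.Theory.
Local Open Scope classical_set_scope.
Local Open Scope ring_scope.
Set Implicit Arguments. Unset Strict Implicit. Unset Printing Implicit Defensive.

Definition s2o (s : status) : 'I_3 :=
  match s with Running => inord 0 | Rejected => inord 1 | Accepted => inord 2 end.
Definition o2s (i : 'I_3) : status :=
  match val i with 0 => Running | 1 => Rejected | _ => Accepted end.
Lemma s2oK : cancel s2o o2s. Proof. by case; rewrite /o2s /= inordK. Qed.
HB.instance Definition _ := Finite.copy status (can_type s2oK).
Section Meas.
Context (d : measure_display) (T : measurableType d).

Lemma meas_const (Pr : Prop) : measurable [set _ : T | Pr].
Proof.
case: (pselect Pr) => H.
  by rewrite (_ : [set _ | Pr] = setT) //; apply/seteqP; split.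
by rewrite (_ : [set _ | Pr] = set0) //; apply/seteqP; split.
Qed.

Lemma mlem (Y X : finType) (f : T -> Y) (Q : X -> T -> bool)
  (H : Y -> (X -> bool) -> Prop) :
  (forall y, measurable [set w | f w = y]) ->
  (forall x, measurable [set w | Q x w]) ->
  measurable [set w | H (f w) (fun x => Q x w)].
Proof.
move=> mf mQ.
have -> : [set w | H (f w) (fun x => Q x w)] =
  \bigcup_(y in [set: Y]) \bigcup_(v in [set: {ffun X -> bool}])
    ([set w | f w = y] `&` \bigcap_(x in [set: X]) [set w | Q x w = v x]
      `&` [set _ | H y (fun x => v x)]).
  apply/seteqP; split => w /=.
    move=> Hw; exists (f w) => //; exists [ffun x => Q x w] => //.
    split; [split => // x _ /=; by rewrite ffunE|].
    by rewrite /= (_ : (fun x => [ffun x => Q x w] x) = (fun x => Q x w)) //;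
      apply/funext => x; rewrite ffunE.
  move=> [y _ [v _ [[fy Qv] Hy]]].
  rewrite fy (_ : (fun x => Q x w) = (fun x => v x)) //.
  by apply/funext => x; apply: Qv.
apply: fin_bigcup_measurable; first exact: finite_finset.
move=> y _; apply: fin_bigcup_measurable; first exact: finite_finset.
move=> v _; apply: measurableI; last exact: meas_const.
apply: measurableI => //; apply: fin_bigcap_measurable; first exact: finite_finset.
move=> x _; case: (v x).
  by rewrite (_ : [set w | Q x w = true] = [set w | Q x w]).
rewrite (_ : [set w | Q x w = false] = ~` [set w | Q x w]).
  exact: measurableC.
by apply/seteqP; split => w /=; case: (Q x w).
Qed.
End Meas.
Section Conf.
Context (K : nat) (R : realType) (alpha : R) (d : measure_display) (T : measurableType d)
  (p : nat -> {set 'I_K} -> {set 'I_K} -> T -> R)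
  (mp : forall b A B, measurable_fun [set: T] (p b A B)).

Definition CT := ({set {set 'I_K}} * status)%type.
Definition PT := ({set 'I_K} * {set 'I_K})%type.
Definition XT := ((PT * PT) + PT)%type.
Definition Qb (b : nat) (x : XT) (w : T) : bool :=
  match x with
  | inl ij => Order.ge (p b ij.1.1 ij.1.2 w) (p b ij.2.1 ij.2.2 w)
  | inr AB => p b AB.1 AB.2 w < alpha / K%:R
  end.
Definition stepH (c : CT) (v : XT -> bool) : CT :=
  match c.2 with
  | Running =>
    let S := c.1 in
    if (#|S| <= 1)%N then (S, Accepted)
    else if [forall A in S, forall B in S, (A != B) ==> v (inr (A, B))]
    then (S, Rejected)
    else (Defs.merge S (extremum (fun i j => v (inl (i, j))) (finset.set0, finset.set0)
            (fun AB : PT => (AB.1 \in S) && (AB.2 \in S) && (AB.1 != AB.2)) id),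
          Running)
  | _ => c
  end.

Lemma config_step b w :
  config alpha p b.+1 w = stepH (config alpha p b w) (fun x => Qb b x w).
Proof. by []. Qed.

Lemma mQb b x : measurable [set w | Qb b x w].
Proof.
case: x => [[[A B] [C D]]|[A B]] /=.
  have := measurable_fun_le measurableT (mp b C D) (mp b A B).
  by rewrite setTI.
rewrite (_ : [set w | p b A B w < alpha / K%:R] =
   ~` [set w | (fun _ => alpha / K%:R) w <= p b A B w]).
  apply: measurableC.
  have := measurable_fun_le measurableT (measurable_cst (alpha / K%:R)) (mp b A B).
  by rewrite setTI.
by apply/seteqP; split => w /=; rewrite ltNge => /negP.
Qed.

Lemma mconfig b (c : CT) : measurable [set w | config alpha p b w = c].
Proof.
elim: b c => [|b IH] c; first exact: (@meas_const _ T ((initial_clusters K, Running) = c)).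
under eq_set do rewrite config_step.
exact: (mlem (fun c' v => stepH c' v = c) IH (mQb b)).
Qed.
End Conf.
Section SeqMeas.
Context (d : measure_display) (T : measurableType d) (R : realType)
  (mu : {measure set T -> \bar R}).
Local Open Scope ereal_scope.

Lemma bigU_in (I : eqType) (s : seq I) (F : I -> set T) x :
  (\big[setU/set0]_(i <- s) F i) x -> exists i, i \in s /\ F i x.
Proof.
elim: s => [|a s IH]; first by rewrite big_nil.
rewrite big_cons => -[Fa|/IH [i [si Fi]]]; first by exists a; rewrite mem_head.
by exists i; rewrite in_cons si orbT.
Qed.

Lemma sub_seq (I : Type) (s : seq I) (F : I -> set T) (A : set T) :
  (forall i, measurable (F i)) -> measurable A ->
  A `<=` \big[setU/set0]_(i <- s) F i ->
  mu A <= \sum_(i <- s) mu (F i).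
Proof.
move=> mF; elim: s A => [|a s IH] A mA sA.
  rewrite big_nil; have -> : A = set0 by apply/seteqP; split => // x /sA; rewrite big_nil.
  by rewrite measure0.
rewrite big_cons.
have mB : measurable (\big[setU/set0]_(i <- s) F i) by apply: bigsetU_measurable.
apply: (le_trans (le_measure _ _ _ sA)); rewrite ?inE.
- exact: mA.
- by rewrite big_cons; apply: measurableU.
rewrite big_cons; apply: (le_trans (measureU2 _ _ _)) => //.
by apply: leeD => //; apply: IH.
Qed.

Lemma add_seq (I : eqType) (s : seq I) (F : I -> set T) :
  (forall i, measurable (F i)) -> uniq s ->
  (forall i j, i != j -> F i `&` F j = set0) ->
  mu (\big[setU/set0]_(i <- s) F i) = \sum_(i <- s) mu (F i).
Proof.
move=> mF; elim: s => [|a s IH]; first by rewrite !big_nil measure0.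
move=> /= /andP[nas us] dF; rewrite !big_cons measureU //.
- by congr (_ + _); apply: IH => // i j /dF.
- by apply: bigsetU_measurable.
apply/seteqP; split => // x [Fa /bigU_in [i [si Fi]]].
have ai : a != i by apply/eqP => ai; by move: nas; rewrite ai si.
by rewrite -(dF _ _ ai); split.
Qed.
End SeqMeas.
Section Proc.
Context (K : nat) (R : realType) (alpha : R) (T : Type)
  (p : nat -> {set 'I_K} -> {set 'I_K} -> T -> R).

Lemma rej n w : (config alpha p n w).2 = Rejected ->
  exists b, [/\ (b < n)%N, (config alpha p b w).2 = Running,
    (1 < #|(config alpha p b w).1|)%N,
    all_below alpha p b (config alpha p b w).1 w &
    (config alpha p n w).1 = (config alpha p b w).1].
Proof.
elim: n => [//|n IH].
rewrite [config _ _ n.+1 _]/=.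
case E: (config alpha p n w) => [S [| |]] /=.
- case: ifP => // h1; case: ifP => // h2 _.
  by exists n; rewrite E; split => //=; rewrite ltnNge h1.
- rewrite E in IH; have [b [? ? ? ? ?]] := IH erefl.
  by exists b; split => //; apply: ltnW.
- by [].
Qed.

Lemma merge_pairP b (S : {set {set 'I_K}}) w : (1 < #|S|)%N ->
  let AB := merge_pair p b S w in [/\ AB.1 \in S, AB.2 \in S & AB.1 != AB.2].
Proof.
move=> /card_gt1P [A [B [AS BS AB]]].
set P := (fun AB : {set 'I_K} * {set 'I_K} => (AB.1 \in S) && (AB.2 \in S) && (AB.1 != AB.2)).
have PAB : P (A, B) by rewrite /P /= AS BS AB.
suff : P (merge_pair p b S w) by rewrite /P => /andP[/andP[-> ->] ->].
rewrite /merge_pair /Order.arg_max /extremum.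
case: pickP => [i /andP[Pi _] //|no_i].
have := @extremumP _ _ >=%O (A, B) P (fun AB => p b AB.1 AB.2 w).
move=> /(_ (fun x => lexx x)) /(_ (fun x y z h1 h2 => le_trans h2 h1)).
move=> /(_ (fun x y => le_total y x)) /(_ PAB).
rewrite /extremum; case: pickP => [i Hi|no_i2] /=; first by move: (no_i i); rewrite Hi.
case=> k Pk hk.
have := no_i k; rewrite /=; move: Pk; rewrite /P => -> /=.
suff -> : [forall (j | (j.1 \in S) && (j.2 \in S) && (j.1 != j.2)),
   p b j.1 j.2 w <= p b k.1 k.2 w] by [].
by apply/forallP => j; apply/implyP => /hk.
Qed.

Lemma inv (sim : {set 'I_K} -> {set 'I_K} -> bool) :
  (forall A B, sim A B = sim B A) ->
  (forall A B D, sim A B -> sim A D -> sim B D -> sim A (B :|: D)) ->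
  (forall i j : 'I_K, i != j -> sim (finset.set1 i) (finset.set1 j)) ->
  forall n w A B, A \in (config alpha p n w).1 -> B \in (config alpha p n w).1 ->
    A != B -> sim A B.
Proof.
move=> hsym hm h0; elim => [|n IH] w.
  move=> A B /= /imsetP [i _ ->] /imsetP [j _ ->] ij; apply: h0.
  by apply: contraNneq ij => ->.
rewrite [config _ _ n.+1 _]/=.
case E: (config alpha p n w) => [S [| |]] /=; last 2 first.
- by move: (IH w); rewrite E.
- by move: (IH w); rewrite E.
have IHS : forall A B, A \in S -> B \in S -> A != B -> sim A B.
  by move: (IH w); rewrite E.
case: ifP => h1 //=; case: ifP => h2 //=.
have [A0S B0S A0B0] := merge_pairP n w (S := S) (ltac:(by rewrite ltnNge h1)).
move: A0S B0S A0B0; rewrite /Defs.merge.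
case: (merge_pair p n S w) => A0 B0 /= A0S B0S A0B0.
have key : forall C, C \in (S :\ A0) :\ B0 -> sim C (A0 :|: B0).
  move=> C; rewrite !inE => /andP[CB0 /andP[CA0 CS]].
  apply: hm; [exact: IHS|exact: IHS|exact: IHS].
move=> A B; rewrite !inE => hA hB AB.
case/orP: hA => [hA | /eqP eA]; case/orP: hB => [hB | /eqP eB].
- move: hA hB => /andP[_ /andP[_ hA]] /andP[_ /andP[_ hB]]; exact: IHS.
- by rewrite eB; apply: key; rewrite !inE.
- by rewrite eA hsym; apply: key; rewrite !inE.
- by rewrite eA eB eqxx in AB.
Qed.
End Proc.

Lemma in_bigU (d : measure_display) (T : measurableType d) (I : eqType) (s : seq I) (F : I -> set T) i x :
  i \in s -> F i x -> (\big[setU/set0]_(j <- s) F j) x.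
Proof.
elim: s => [//|a s IH]; rewrite in_cons big_cons => /orP[/eqP <- Fx|/IH h /h]; by [left|right].
Qed.

Unset Implicit Arguments.
Set Strict Implicit.

Theorem theorem4p2 (K : nat) (R : realType) (alpha : R)
  (d : measure_display) (T : measurableType d) (P : probability T R)
  (sim : {set 'I_K} -> {set 'I_K} -> bool)
  (p : nat -> {set 'I_K} -> {set 'I_K} -> T -> R) :
  (2 <= K)%N -> 0 < alpha < 1 ->
  (* similarity is symmetric *)
  (forall A B, sim A B = sim B A) ->
  (* merge invariance *)
  (forall A B D, sim A B -> sim A D -> sim B D -> sim A (B :|: D)) ->
  (* p-values are measurable statistics with values in [0,1] *)
  (forall b A B, measurable_fun [set: T] (p b A B)) ->
  (forall b A B w, 0 <= p b A B w <= 1) ->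
  (* validity, conditionally on the merge history *)
  (forall (b : nat) (h : seq ({set {set 'I_K}} * status)) (A B : {set 'I_K}) (t : R),
     (last (initial_clusters K, Running) h).2 = Running ->
     A \in (last (initial_clusters K, Running) h).1 ->
     B \in (last (initial_clusters K, Running) h).1 ->
     A != B -> sim A B -> 0 <= t <= 1 ->
     (P ([set w | (p b A B w <= t)%R] `&` [set w | history alpha p b w = h])
       <= t%:E * P [set w | history alpha p b w = h])%E) ->
  ((forall i j : 'I_K, i != j -> sim (finset.set1 i) (finset.set1 j)) ->
     (P [set w | (final alpha p w).2 = Rejected] <= alpha%:E)%E)
  /\
  (P [set w | (final alpha p w).2 = Rejected /\
        exists A B, [/\ A \in (final alpha p w).1, B \in (final alpha p w).1,
                        A != B & sim A B]] <= alpha%:E)%E.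
Proof.
move=> K2 /andP[a0 a1] hsym hm mp p01 hval.
have Kpos : (0 < K)%N by apply: leq_trans K2.
have K0 : (K%:R : R) != 0 by rewrite pnatr_eq0 -lt0n.
set c := alpha / K%:R.
have c0 : 0 <= c by rewrite /c divr_ge0 // ?ltW // ler0n.
have c1 : c <= 1.
  rewrite /c ler_pdivrMr ?ltr0n // mul1r; apply: (le_trans (ltW a1)).
  by rewrite ler1n.
have mconf := mconfig alpha mp.
pose Eb b := [set w | (config alpha p b w).2 = Running /\
   all_below alpha p b (config alpha p b w).1 w /\
   exists A B, [/\ A \in (config alpha p b w).1, B \in (config alpha p b w).1,
                   A != B & sim A B]].
have mEb b : measurable (Eb b).
  exact: (mlem (fun (c : CT K) (v : XT K -> bool) => c.2 = Running /\
     [forall A in c.1, forall B in c.1, (A != B) ==> v (inr (A, B))] /\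
     exists A B, [/\ A \in c.1, B \in c.1, A != B & sim A B])
     (mconf b) (mQb alpha mp b)).
have bound b : (P (Eb b) <= c%:E)%E.
  pose TT := (b.+1).-tuple (CT K).
  pose Hs (t : TT) := [set w | history alpha p b w = tval t].
  have mHs t : measurable (Hs t).
    have -> : Hs t = \bigcap_(k in [set: 'I_b.+1])
        [set w | config alpha p k w = nth (initial_clusters K, Running) (tval t) k].
      apply/seteqP; split => w /=.
        by move=> <- k _ /=; rewrite /history nth_mkseq.
      move=> H; apply: (@eq_from_nth _ (initial_clusters K, Running)).
        by rewrite size_mkseq size_tuple.
      rewrite size_mkseq => k kb; rewrite nth_mkseq //.
      exact: (H (Ordinal kb)).
    apply: fin_bigcap_measurable; first exact: finite_finset.
    move=> k _; exact: mconf.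
  have hist_last w : last (initial_clusters K, Running) (history alpha p b w)
      = config alpha p b w.
    by rewrite /history mkseqS last_rcons.
  have cover : Eb b `<=` \big[setU/set0]_(t <- enum {: (b.+1).-tuple (CT K)}) (Eb b `&` Hs t).
    move=> w Ew.
    have sz : size (history alpha p b w) == b.+1 by rewrite size_mkseq.
    apply: (in_bigU (i := Tuple sz)); first by rewrite mem_enum.
    by split.
  apply: (le_trans (sub_seq P _ _ cover)) => //; first by move=> t; apply: measurableI.
  apply: (@le_trans _ _ (\sum_(t <- enum {: (b.+1).-tuple (CT K)}) (c%:E * P (Hs t)))%E).
    apply: lee_sum => t _.
    set h := tval t.
    case: (pselect ((last (initial_clusters K, Running) h).2 = Running /\
       exists A B, [/\ A \in (last (initial_clusters K, Running) h).1,
          B \in (last (initial_clusters K, Running) h).1, A != B & sim A B])).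
      move=> [hR [A [B [hA hB AB sAB]]]].
      apply: le_trans (hval b h A B c hR hA hB AB sAB _); last by rewrite c0 c1.
      apply: le_measure; rewrite ?inE.
      - exact: measurableI (mEb b) (mHs t).
      - apply: measurableI; last exact: (mHs t).
        have := measurable_fun_le measurableT (mp b A B) (measurable_cst c).
        by rewrite setTI.
      move=> w [[_ [ab _]] hw]; split => //=.
      move: ab => /forallP /(_ A) /implyP; rewrite -hist_last hw.
      by move=> /(_ hA) /forallP /(_ B) /implyP /(_ hB) /implyP /(_ AB) /ltW.
    move=> nh.
    have -> : Eb b `&` Hs t = set0.
      apply/seteqP; split => // w [[hR [_ ex]] hw]; apply: nh.
      by rewrite /h -hw hist_last; split.
    by rewrite measure0; apply: mule_ge0 => //; rewrite lee_fin.
  rewrite -ge0_sume_distrr; last by move=> t _; apply: measure_ge0.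
  rewrite -add_seq //; last 2 first.
  - exact: enum_uniq.
  - move=> t1 t2 t12; apply/seteqP; split => // w [/= e1 e2].
    by move: t12; rewrite -(val_inj (etrans (esym e1) e2)) eqxx.
  rewrite -[X in (_ <= X)%E]mule1; apply: lee_wpmul2l; first by rewrite lee_fin.
  apply: probability_le1; exact: bigsetU_measurable.
pose E := [set w | (final alpha p w).2 = Rejected /\
        exists A B, [/\ A \in (final alpha p w).1, B \in (final alpha p w).1,
                        A != B & sim A B]].
have mE : measurable E.
  exact: (mlem (X := unit) (fun (c : CT K) (_ : unit -> bool) => c.2 = Rejected /\
        exists A B, [/\ A \in c.1, B \in c.1, A != B & sim A B])
     (mconf K) (fun _ => @meas_const _ T true)).
have part2 : (P E <= alpha%:E)%E.
  have cover : E `<=` \big[setU/set0]_(b <- index_iota 0 K) Eb b.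
    move=> w [hR [A [B [hA hB AB sAB]]]].
    have [b [bK bR _ ab eS]] := rej hR.
    apply: (in_bigU (i := b)); first by rewrite mem_index_iota.
    split => //; split => //; exists A, B.
    by rewrite /final eS in hA hB; split.
  apply: (le_trans (sub_seq P _ mE cover)) => //.
  apply: (@le_trans _ _ (\sum_(b <- index_iota 0 K) c%:E)%E).
    by apply: lee_sum => b _; apply: bound.
  rewrite sumEFin sumr_const_nat subn0 lee_fin -mulr_natr /c divfK //.
split => // H0.
apply: le_trans part2; apply: le_measure; rewrite ?inE //.
  exact: (mlem (X := unit) (fun (c : CT K) (_ : unit -> bool) => c.2 = Rejected)
     (mconf K) (fun _ => @meas_const _ T true)).
move=> w hR; split => //.
have [b [bK bR b1 ab eS]] := rej hR.
have [A [B [hA hB AB]]] := card_gt1P b1.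
exists A, B; rewrite /final eS; split => //.
exact: (inv hsym hm H0 hA hB AB).
Qed.
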